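(* Let $E$ be a finite set and $\P$ a poset on $E$. Suppose $\mathcal{B}$ is the set of bases of some U-matroid with characteristic poset $\P$. Then $\mathcal{B}^*=\{E\setminus B: B\in\mathcal{B}\}$ is the set of bases of a U-matroid with characteristic poset $\P^*$ (the dual poset of $\P$, obtained by reversing all relations).
   Context: A U-matroid is a triple $(E,\mathcal{D},\rho)$ with $\mathcal{D}\subseteq2^E$ an accessible distributive lattice (containing $\emptyset,E$, closed under $\cup,\cap$, each nonempty $A\in\mathcal{D}$ has some $x$ with $A\setminus\{x\}\in\mathcal{D}$) and $\rho:\mathcal{D}\to\mathbb{N}$ satisfying $\rho(\emptyset)=0$; $\rho(A)\le\rho(B)$ for $A\subseteq B$; $\rho(A)+\rho(B)\ge\rho(A\cup B)+\rho(A\cap B)$; and $\rho(A\cup\{e\})-\rho(A)\le1$ whenever $A,A\cup\{e\}\in\mathcal{D}$. Its characteristic poset is the poset on $E$ with $i\le j$ iff every element of $\mathcal{D}$ containing $j$ also contains $i$ (so $\mathcal{D}$ is the lattice of order ideals of this poset). Its bases are the supports of the vertices of the base polyhedron $\{\mathbf{x}\in\mathbb{R}^E:\sum_{a\in A}x_a\le\rho(A)\ \forall A\in\mathcal{D},\ \sum_{e\in E}x_e=\rho(E)\}$. *)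

(* Defs.v *)
From HB Require Import structures.
From mathcomp Require Import all_boot all_order all_algebra.
From mathcomp Require Import reals.
Set Implicit Arguments. Unset Strict Implicit. Unset Printing Implicit Defensive.
Import Order.TTheory GRing.Theory Num.Theory.
Local Open Scope ring_scope.

Definition accessible_distr_lattice (E : finType) (D : {set {set E}}) : Prop :=
  [/\ set0 \in D, setT \in D,
      (forall A B, A \in D -> B \in D -> A :|: B \in D),
      (forall A B, A \in D -> B \in D -> A :&: B \in D)
    & (forall A, A \in D -> A != set0 -> exists2 x, x \in A & A :\ x \in D)].

(* U-matroid (E, D, rho); rho only matters on D. *)
Definition is_umatroid (E : finType) (D : {set {set E}}) (rho : {set E} -> nat)
  : Prop :=
  [/\ accessible_distr_lattice D,
      rho set0 = 0%N,
      (forall A B, A \in D -> B \in D -> A \subset B -> (rho A <= rho B)%N),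
      (forall A B, A \in D -> B \in D ->
         (rho (A :|: B) + rho (A :&: B) <= rho A + rho B)%N)
    & (forall A e, A \in D -> A :|: [set e] \in D ->
         (rho (A :|: [set e]) <= (rho A).+1)%N)].

Definition char_le (E : finType) (D : {set {set E}}) (i j : E) : Prop :=
  forall A, A \in D -> j \in A -> i \in A.

Definition is_poset (E : finType) (le : rel E) : Prop :=
  [/\ reflexive le, antisymmetric le & transitive le].

Definition dual_rel (E : finType) (le : rel E) : rel E := fun i j => le j i.

Definition in_base_polyhedron (R : realType) (E : finType) (D : {set {set E}})
  (rho : {set E} -> nat) (x : {ffun E -> R}) : Prop :=
  (forall A, A \in D -> \sum_(a in A) x a <= (rho A)%:R)
  /\ \sum_(e : E) x e = (rho setT)%:R.

Definition is_vertex (R : realType) (E : finType) (D : {set {set E}})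
  (rho : {set E} -> nat) (x : {ffun E -> R}) : Prop :=
  in_base_polyhedron D rho x /\
  (forall (y z : {ffun E -> R}) (t : R),
     in_base_polyhedron D rho y -> in_base_polyhedron D rho z ->
     0 < t -> t < 1 -> (forall e, x e = t * y e + (1 - t) * z e) -> y = z).

Definition support (R : realType) (E : finType) (x : {ffun E -> R}) : {set E} :=
  [set e | x e != 0].

Definition is_basis (R : realType) (E : finType) (D : {set {set E}})
  (rho : {set E} -> nat) (B : {set E}) : Prop :=
  exists x : {ffun E -> R}, is_vertex D rho x /\ B = support x.

Definition umatroid_bases (R : realType) (E : finType) (le : rel E)
  (Bs : {set {set E}}) : Prop :=
  exists (D : {set {set E}}) (rho : {set E} -> nat),
    [/\ is_umatroid D rho,
        (forall i j, le i j <-> char_le D i j)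
      & (forall B, B \in Bs <-> is_basis R D rho B)].

(* Main.v *)
Require Import Defs.
From HB Require Import structures.
From mathcomp Require Import all_boot all_order all_algebra.
From mathcomp Require Import reals.
From mathcomp Require Import ring lra zify.
Set Implicit Arguments. Unset Strict Implicit. Unset Printing Implicit Defensive.
Import Order.TTheory GRing.Theory Num.Theory.
Local Open Scope ring_scope.

Lemma sum_setT (R : realType) (E : finType) (F : E -> R) :
  \sum_(e : E) F e = \sum_(e in [set: E]) F e.
Proof. by apply: eq_bigl => e; rewrite in_setT. Qed.

Lemma sum_UI (R : realType) (E : finType) (F : E -> R) (A B : {set E}) :
  \sum_(a in A :|: B) F a + \sum_(a in A :&: B) F a =
  \sum_(a in A) F a + \sum_(a in B) F a.
Proof.
rewrite (big_setID (A := A :|: B) B) /= (big_setID (A := A) B) /=.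
have -> : (A :|: B) :&: B = B by apply/setIidPr; apply: subsetUr.
have -> : (A :|: B) :\: B = A :\: B by rewrite setDUl setDv setU0.
by move: (\sum_(i in B) F i) (\sum_(i in A :\: B) F i) (\sum_(i in A :&: B) F i) => a b c; ring.
Qed.

Lemma sum_indic (R : realType) (E : finType) (A : {set E}) (e : E) :
  \sum_(a in A) ((a == e)%:R : R) = (e \in A)%:R.
Proof.
case: (boolP (e \in A)) => eA.
  rewrite (big_setD1 e eA) /= eqxx big1 ?addr0 // => a.
  by rewrite !inE => /andP [/negPf -> _].
by rewrite big1 // => a aA; case: eqP => // ae; rewrite -ae aA in eA.
Qed.

Lemma perturb (R : realType) (E : finType) (D : {set {set E}})
  (rho : {set E} -> nat) (x : {ffun E -> R}) (e f : E) :
  [set: E] \in D -> is_vertex D rho x -> e != f ->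
  (forall A, A \in D -> \sum_(a in A) x a = (rho A)%:R -> (e \in A) = (f \in A)) ->
  False.
Proof.
move=> HT [[Hle Htot] Hext] nef Hsep.
pose S := [set A in D | \sum_(a in A) x a < (rho A)%:R].
pose eps : R := \big[Num.min/1]_(A in S) ((rho A)%:R - \sum_(a in A) x a).
have eps_gt0 : 0 < eps.
  apply: (big_ind (fun r : R => 0 < r)) => //.
    by move=> a b a0 b0; rewrite lt_min a0 b0.
  by move=> A; rewrite inE => /andP [_]; rewrite subr_gt0.
have eps_le : forall A, A \in S -> eps <= (rho A)%:R - \sum_(a in A) x a.
  move=> A AS; rewrite /eps (bigD1 A AS) /=.
  by rewrite ge_min lexx.
pose d : {ffun E -> R} := [ffun a => (a == e)%:R - (a == f)%:R].
have sumd : forall A : {set E}, \sum_(a in A) d a = (e \in A)%:R - (f \in A)%:R.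
  move=> A; under eq_bigr do rewrite ffunE.
  by rewrite sumrB !sum_indic.
pose y : {ffun E -> R} := [ffun a => x a + eps * d a].
pose z : {ffun E -> R} := [ffun a => x a - eps * d a].
have sumy : forall A : {set E}, \sum_(a in A) y a = \sum_(a in A) x a + eps * ((e \in A)%:R - (f \in A)%:R).
  move=> A; under eq_bigr do rewrite ffunE.
  by rewrite big_split /= -mulr_sumr sumd.
have sumz : forall A : {set E}, \sum_(a in A) z a = \sum_(a in A) x a - eps * ((e \in A)%:R - (f \in A)%:R).
  move=> A; under eq_bigr do rewrite ffunE.
  by rewrite sumrB /= -mulr_sumr sumd.
have key : forall A, A \in D -> 
   \sum_(a in A) x a + eps * ((e \in A)%:R - (f \in A)%:R) <= (rho A)%:R /\
   \sum_(a in A) x a - eps * ((e \in A)%:R - (f \in A)%:R) <= (rho A)%:R.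
  move=> A AD; have := Hle A AD; rewrite le_eqVlt => /orP [/eqP tA | ltA].
    by rewrite (Hsep A AD tA) subrr mulr0 addr0 subr0 tA.
  have AS : A \in S by rewrite inE AD ltA.
  have := eps_le A AS.
  by case: (e \in A); case: (f \in A); rewrite /= ?subrr ?sub0r ?subr0 ?mulr0 ?mulrN ?mulr1;
    split; lra.
have Htot' : \sum_(a in [set: E]) x a = (rho setT)%:R by rewrite -sum_setT.
have yP : in_base_polyhedron D rho y.
  split; first by move=> A AD; rewrite sumy; case: (key A AD).
  by rewrite sum_setT sumy (Hsep _ HT Htot') subrr mulr0 addr0.
have zP : in_base_polyhedron D rho z.
  split; first by move=> A AD; rewrite sumz; case: (key A AD).
  by rewrite sum_setT sumz (Hsep _ HT Htot') subrr mulr0 subr0.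
have := Hext y z (1/2) yP zP.
have h1 : (0 : R) < 1/2 by lra.
have h2 : (1/2 : R) < 1 by lra.
move=> /(_ h1 h2) yz.
have : y e = z e.
  rewrite yz //.
  by move=> a; rewrite !ffunE; lra.
rewrite !ffunE eqxx (negPf nef) subr0 mulr1.
lra.
Qed.

Lemma vertex01 (R : realType) (E : finType) (D : {set {set E}})
  (rho : {set E} -> nat) (x : {ffun E -> R}) :
  is_umatroid D rho -> is_vertex D rho x -> forall e, x e = 0 \/ x e = 1.
Proof.
move=> [[D0 DT DU DI Dacc] rho0 rmono rsub runit] Hv e.
have [[Hle Htot] _] := Hv.
pose tight A := (A \in D) && (\sum_(a in A) x a == (rho A)%:R).
have tT : tight setT by rewrite /tight DT -sum_setT Htot eqxx.
have t0 : tight set0 by rewrite /tight D0 big_set0 rho0 eqxx.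
have tUI : forall A B, tight A -> tight B -> tight (A :|: B) && tight (A :&: B).
  move=> A B /andP [AD /eqP tA] /andP [BD /eqP tB].
  have hU := Hle _ (DU _ _ AD BD); have hI := Hle _ (DI _ _ AD BD).
  have hs := sum_UI x A B.
  have hr := rsub _ _ AD BD.
  have hr' : (rho (A :|: B))%:R + (rho (A :&: B))%:R <= (rho A)%:R + (rho B)%:R :> R.
    by rewrite -!natrD ler_nat.
  rewrite /tight DU // DI //=.
  apply/andP; split; apply/eqP; lra.
have tU : forall A B, tight A -> tight B -> tight (A :|: B).
  by move=> A B tA tB; case/andP: (tUI A B tA tB).
have tI : forall A B, tight A -> tight B -> tight (A :&: B).
  by move=> A B tA tB; case/andP: (tUI A B tA tB).
pose M := \bigcap_(A | tight A && (e \in A)) A.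
pose L := \bigcup_(A | tight A && (A \subset M) && (e \notin A)) A.
have tM : tight M by apply: (big_ind tight) => // A /andP [].
have tL : tight L by apply: (big_ind tight) => // A /andP [/andP []].
have eM : e \in M by apply/bigcapP => A /andP [].
have Msub : forall A, tight A -> e \in A -> M \subset A.
  by move=> A tA eA; apply: (bigcap_inf A); rewrite tA eA.
have LM : L \subset M by apply/bigcupsP => A /andP [/andP []].
have eL : e \notin L by apply/bigcupP => [[A /andP [_ eA] eA']]; rewrite eA' in eA.
have Lsup : forall A, tight A -> A \subset M -> e \notin A -> A \subset L.
  by move=> A tA AM eA; apply: (bigcup_sup A); rewrite tA AM eA.
have ML : M :\ e = L.
  apply/eqP; rewrite eqEsubset; apply/andP; split; last first.
    by apply/subsetP => a aL; rewrite !inE (subsetP LM _ aL) andbT; apply: contraNneq eL => <-.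
  apply/subsetP => f; rewrite !inE => /andP [nfe fM].
  case: (boolP (f \in L)) => // fL; exfalso.
  apply: (perturb DT Hv (e := e) (f := f)); first by rewrite eq_sym.
  move=> A AD tA.
  have tA' : tight A by rewrite /tight AD tA eqxx.
  case: (boolP (e \in A)) => eA.
    by rewrite (subsetP (Msub A tA' eA) _ fM).
  case: (boolP (f \in A)) => // fA.
  have : A :&: M \subset L.
    apply: Lsup; first exact: tI.
      exact: subsetIr.
    by rewrite inE (negPf eA).
  by move/subsetP/(_ f); rewrite inE fA fM => /(_ isT); rewrite (negPf fL).
have MD : M \in D by case/andP: tM.
have LD : L \in D by case/andP: tL.
have ME : M = L :|: [set e].
  by rewrite -ML setUC setD1K.
have Msum : \sum_(a in M) x a = x e + \sum_(a in L) x a.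
  by rewrite (big_setD1 e eM) ML.
have h1 := rmono _ _ LD MD LM.
have h2 := runit L e LD (eq_ind _ (fun S => S \in D) MD _ ME).
move: tM tL => /andP [_ /eqP tM] /andP [_ /eqP tL].
rewrite -ME in h2.
have : x e = (rho M)%:R - (rho L)%:R by rewrite -tM -tL Msum addrK.
case: (leqP (rho M) (rho L)) => h3.
  have -> : rho M = rho L by apply/eqP; rewrite eqn_leq h1 h3.
  by rewrite subrr; left.
have -> : rho M = (rho L).+1 by apply/eqP; rewrite eqn_leq h2 h3.
by rewrite -addn1 natrD addrAC subrr add0r; right.
Qed.

Lemma step_lemma (E : finType) (D : {set {set E}}) :
  accessible_distr_lattice D ->
  forall C C', C \in D -> C' \in D -> C \subset C' -> C != C' ->
  exists2 x, x \in C' :\: C & C :|: [set x] \in D.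
Proof.
move=> [D0 DT DU DI Dacc] C C' CD C'D CC' nCC'.
pose I x := \bigcap_(A in D | x \in A) A.
have ID : forall x, I x \in D.
  by move=> x; apply: (big_ind (fun A => A \in D)) => // A /andP [].
have xI : forall x, x \in I x by move=> x; apply/bigcapP => A /andP [].
have Isub : forall x A, A \in D -> x \in A -> I x \subset A.
  by move=> x A AD xA; apply: (bigcap_inf A); rewrite AD xA.
have IxD : forall x, I x :\ x \in D.
  move=> x; have : I x != set0 by apply/set0Pn; exists x.
  case/(Dacc _ (ID x)) => y yI yD.
  case: (eqVneq y x) => [eyx| nyx]; first by rewrite eyx in yD.
  have : I x \subset I x :\ y by apply: Isub => //; rewrite !inE eq_sym nyx xI.
  by move/subsetP/(_ y yI); rewrite !inE eqxx.
suff : forall n x, x \in C' :\: C -> (#|I x| < n)%N ->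
   exists2 y, y \in C' :\: C & I y :\ y \subset C.
  have [x0 x0in] : exists x0, x0 \in C' :\: C.
    apply/set0Pn; rewrite setD_eq0; apply: contra nCC' => C'C.
    by rewrite eqEsubset CC' C'C.
  move/(_ _ x0 x0in (ltnSn _)) => [y yin ysub].
  exists y => //.
  have -> : C :|: [set y] = C :|: I y.
    apply/eqP; rewrite eqEsubset; apply/andP; split.
      by apply: setUS; rewrite sub1set xI.
    rewrite subUset subsetUl /=.
    apply/subsetP => a aI; case: (eqVneq a y) => [->|nay].
      by rewrite !inE eqxx orbT.
    by rewrite inE (subsetP ysub) // !inE nay.
  exact: DU.
elim=> // n IH x xin xn.
case: (boolP (I x :\ x \subset C)) => [h|]; first by exists x.
case/subsetPn => w; rewrite !inE => /andP [nwx wI] wC.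
have xC' : x \in C' by move: xin; rewrite inE => /andP [].
have IxC' : I x \subset C' by apply: Isub.
have win : w \in C' :\: C by rewrite inE wC (subsetP IxC').
apply: (IH w win).
have IwIx : I w \subset I x by apply: Isub.
have xIw : x \notin I w.
  apply/negP => xIw.
  have : I x \subset I w :\ w by apply: Isub => //; rewrite !inE xIw andbT; apply: contraNneq nwx => ->.
  by move/subsetP/(_ w wI); rewrite !inE eqxx.
have : I w \proper I x by rewrite properEneq IwIx andbT; apply: contraNneq xIw => ->; exact: xI.
by move/proper_card => h; apply: leq_trans h _.
Qed.

Lemma chain_bound (E : finType) (D : {set {set E}}) (rho : {set E} -> nat) :
  is_umatroid D rho ->
  forall C C', C \in D -> C' \in D -> C \subset C' ->
  (rho C' <= rho C + #|C' :\: C|)%N.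
Proof.
move=> [HD rho0 rmono rsub runit].
move=> C C'; move: {2}#|C' :\: C| (erefl #|C' :\: C|) => n.
elim: n C => [|n IH] C hn CD C'D CC'.
  move/eqP: hn; rewrite cards_eq0 setD_eq0 => C'C.
  have -> : C' = C by apply/eqP; rewrite eqEsubset C'C CC'.
  exact: leq_addr.
have nCC' : C != C' by apply/eqP => eCC; move: hn; rewrite -eCC setDv cards0.
have [x xin xD] := step_lemma HD CD C'D CC' nCC'.
move: xin; rewrite inE => /andP [xC xC'].
have sub : C :|: [set x] \subset C' by rewrite subUset CC' sub1set.
have hn' : #|C' :\: (C :|: [set x])| = n.
  have : #|C' :\: C| = (#|C' :\: (C :|: [set x])|).+1.
    have e1 : C' :\: C = x |: (C' :\: (C :|: [set x])).
      apply/setP => a; rewrite !inE; case: (eqVneq a x) => [->|] //=.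
        by rewrite xC xC'.
      by move=> _; rewrite orbF.
    by rewrite e1 cardsU1 !inE eqxx /= orbT /= add1n.
  by rewrite hn => [[]].
have := IH _ hn' xD C'D sub.
have := runit C x CD xD.
lia.
Qed.

Definition dualD (E : finType) (D : {set {set E}}) : {set {set E}} :=
  [set ~: A | A in D].
Definition dualrho (E : finType) (rho : {set E} -> nat) (A : {set E}) : nat :=
  (#|A| + rho (~: A) - rho setT)%N.
Definition cfun (R : realType) (E : finType) (x : {ffun E -> R}) : {ffun E -> R} :=
  [ffun a => 1 - x a].

Lemma in_dualD (E : finType) (D : {set {set E}}) A :
  (A \in dualD D) = (~: A \in D).
Proof.
apply/imsetP/idP => [[B BD ->]|h]; first by rewrite setCK.
by exists (~: A); rewrite ?setCK.
Qed.

Lemma lowb (E : finType) (D : {set {set E}}) (rho : {set E} -> nat) :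
  is_umatroid D rho -> forall C, C \in D -> (rho setT <= #|~: C| + rho C)%N.
Proof.
move=> H C CD; have [[_ DT _ _ _] _ _ _ _] := H.
have := chain_bound H CD DT (subsetT C).
by rewrite setTD addnC.
Qed.

Lemma dual_umatroid (E : finType) (D : {set {set E}}) (rho : {set E} -> nat) :
  is_umatroid D rho -> is_umatroid (dualD D) (dualrho rho).
Proof.
move=> H; have [[D0 DT DU DI Dacc] rho0 rmono rsub runit] := H.
have lb := lowb H.
split.
- split.
  + by rewrite in_dualD setC0.
  + by rewrite in_dualD setCT.
  + by move=> A B; rewrite !in_dualD setCU; apply: DI.
  + by move=> A B; rewrite !in_dualD setCI; apply: DU.
  + move=> A; rewrite in_dualD => AD An0.
    have nT : ~: A != setT by apply: contra An0 => /eqP h; rewrite -(setCK A) h setCT.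
    have [x xin xD] := step_lemma (And5 D0 DT DU DI Dacc) AD DT (subsetT _) nT.
    exists x; first by move: xin; rewrite setTD setCK.
    by rewrite in_dualD setDE setCI setCK.
- by rewrite /dualrho cards0 add0n setC0 subnn.
- move=> A B; rewrite !in_dualD /dualrho => AD BD AB.
  have sub : ~: B \subset ~: A by rewrite setCS.
  have := chain_bound H BD AD sub.
  have e1 : ~: A :\: ~: B = B :\: A by apply/setP => a; rewrite !inE negbK andbC.
  rewrite e1.
  have := cardsID A B.
  have -> : B :&: A = A by apply/setIidPr.
  lia.
- move=> A B; rewrite !in_dualD /dualrho => AD BD.
  have := cardsUI A B.
  have := rsub _ _ AD BD.
  have := lb _ AD; have := lb _ BD.
  have := lb _ (DU _ _ AD BD); have := lb _ (DI _ _ AD BD).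
  rewrite !setCK -setCI -setCU !setCK.
  lia.
- move=> A e; rewrite !in_dualD /dualrho => AD AeD.
  have := rmono _ _ AeD AD (ltac:(by rewrite setCS subsetUl)).
  have := cardsU1 e A.
  rewrite setUC.
  case: (e \in A) => /=; lia.
Qed.

Lemma inP_dual (R : realType) (E : finType) (D : {set {set E}}) (rho : {set E} -> nat)
  (x : {ffun E -> R}) : is_umatroid D rho ->
  in_base_polyhedron D rho x <-> in_base_polyhedron (dualD D) (dualrho rho) (cfun x).
Proof.
move=> H; have [[D0 DT DU DI Dacc] rho0 rmono rsub runit] := H.
have rv : forall A, A \in dualD D ->
  ((dualrho rho A)%:R : R) = #|A|%:R + (rho (~: A))%:R - (rho setT)%:R.
  move=> A; rewrite in_dualD => AD; rewrite /dualrho natrB; last first.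
    by have := lowb H AD; rewrite setCK.
  by rewrite natrD.
have cs : forall (y : {ffun E -> R}) (A : {set E}), \sum_(a in A) cfun y a = #|A|%:R - \sum_(a in A) y a.
  move=> y A; under eq_bigr do rewrite ffunE.
  by rewrite sumrB sumr_const.
have cmp : forall A : {set E}, \sum_(a in A) x a + \sum_(a in ~: A) x a = \sum_(e : E) x e.
  move=> A; rewrite -sum_UI setUCr setICr big_set0 addr0.
  by rewrite sum_setT.
have rT : (rho (~: setT))%N = 0%N by rewrite setCT.
have tot : forall y : {ffun E -> R}, \sum_(e : E) cfun y e = #|E|%:R - \sum_(e : E) y e.
  by move=> y; rewrite !sum_setT cs cardsT.
have rvT : ((dualrho rho setT)%:R : R) = #|E|%:R - (rho setT)%:R.
  by rewrite rv ?in_dualD ?setCT // cardsT rho0 addr0.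
split.
- move=> [Hle Htot]; split; last by rewrite tot Htot rvT.
  move=> A AD; rewrite cs (rv A AD).
  rewrite in_dualD in AD.
  have := Hle _ AD; have := cmp (~: A); rewrite setCK Htot.
  lra.
- move=> [Hle Htot]; split.
    move=> A AD.
    have AD' : ~: A \in dualD D by rewrite in_dualD setCK.
    have := Hle _ AD'; rewrite cs (rv _ AD') setCK.
    have := cmp A; rewrite tot rvT in Htot.
    lra.
  rewrite tot rvT in Htot; lra.
Qed.

Lemma cfunK (R : realType) (E : finType) (x : {ffun E -> R}) : cfun (cfun x) = x.
Proof. by apply/ffunP => a; rewrite !ffunE subKr. Qed.

Lemma vertex_transfer (R : realType) (E : finType) (D1 D2 : {set {set E}})
  (r1 r2 : {set E} -> nat) :
  (forall x : {ffun E -> R}, in_base_polyhedron D1 r1 x <-> in_base_polyhedron D2 r2 (cfun x)) ->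
  forall x : {ffun E -> R}, is_vertex D1 r1 x -> is_vertex D2 r2 (cfun x).
Proof.
move=> HP x [xP Hext]; split; first by apply/HP.
move=> y z t yP zP t0 t1 hx.
have yP' : in_base_polyhedron D1 r1 (cfun y) by apply/HP; rewrite cfunK.
have zP' : in_base_polyhedron D1 r1 (cfun z) by apply/HP; rewrite cfunK.
have := Hext _ _ t yP' zP' t0 t1.
have h : forall e, x e = t * cfun y e + (1 - t) * cfun z e.
  move=> e; have := hx e; rewrite !ffunE => he.
  have -> : x e = 1 - (1 - x e) by rewrite subKr.
  rewrite he; ring.
by move/(_ h) => eq; rewrite -(cfunK y) eq cfunK.
Qed.

Theorem proposition6p2 (R : realType) (E : finType) (le : rel E)
  (Bs : {set {set E}}) :
  is_poset le ->
  umatroid_bases R le Bs ->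
  umatroid_bases R (dual_rel le) [set ~: B | B in Bs].
Proof.
move=> _ [D [rho [HU Hchar HB]]].
have HP := @inP_dual R E D rho ^~ HU.
have HP' : forall y : {ffun E -> R}, in_base_polyhedron (dualD D) (dualrho rho) y <->
    in_base_polyhedron D rho (cfun y).
  by move=> y; rewrite -{1}(cfunK y); split => /HP.
have supp : forall x : {ffun E -> R}, is_vertex D rho x -> Defs.support (cfun x) = ~: Defs.support x.
  move=> x vx; apply/setP => a; rewrite !inE ffunE.
  by case: (vertex01 HU vx a) => ->; rewrite ?subr0 ?subrr ?eqxx ?oner_neq0.
exists (dualD D), (dualrho rho); split.
- exact: dual_umatroid.
- move=> i j; rewrite /dual_rel Hchar /char_le; split.
    move=> h A; rewrite in_dualD => AD jA; apply/negPn/negP => iA.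
    have : i \in ~: A by rewrite inE.
    by move/(h _ AD); rewrite inE jA.
  move=> h C CD iC; apply/negPn/negP => jC.
  have CD' : ~: C \in dualD D by rewrite in_dualD setCK.
  have := h _ CD'; rewrite !inE iC jC => /(_ isT).
  done.
- move=> B; split.
    case/imsetP => B0 /HB [x [vx ->]] ->.
    exists (cfun x); split; last by rewrite supp.
    exact: vertex_transfer HP x vx.
  move=> [y [vy ->]].
  have vx : is_vertex D rho (cfun y) by apply: vertex_transfer HP' y vy.
  apply/imsetP; exists (Defs.support (cfun y)).
    by apply/HB; exists (cfun y).
  by rewrite -supp // cfunK.
Qed.
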